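(* In the setting of the two-agent SIS epidemic on a finite connected edge-transitive graph $G$ with walking rate $\lambda>0$ and recovery rate $\gamma>0$ (both agents initially infected at the same vertex), let $N$ be the total number of jumps (of both walkers combined) until the two walkers first occupy the same vertex, when started at the two endpoints of an edge. Then for every $s>0$, \[ \mathcal L_T(s)=\frac{2\gamma\left(\dfrac{1-\mathbb E\Big[\big(\tfrac{2\lambda}{2\lambda+s+\gamma}\big)^N\Big]}{s+\gamma}-\dfrac{1-\mathbb E\Big[\big(\tfrac{2\lambda}{2\lambda+s+2\gamma}\big)^N\Big]}{s+2\gamma}\right)}{\dfrac{2\lambda+s}{2\lambda}-2\,\mathbb E\Big[\big(\tfrac{2\lambda}{2\lambda+s+\gamma}\big)^N\Big]+\mathbb E\Big[\big(\tfrac{2\lambda}{2\lambda+s+2\gamma}\big)^N\Big]}, \] where $\mathcal L_T(s)=\mathbb E(e^{-sT})$.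
   Context: Model. $G=(V,E)$ is a finite, connected, undirected graph which is edge-transitive: for any two edges $e_1,e_2\in E$ there is a graph automorphism mapping $e_1$ to $e_2$. Two agents move on $V$ according to independent continuous-time simple random walks: each agent stays at its current vertex for an $\mathrm{Exp}(\lambda)$ holding time, then jumps to a uniformly chosen neighbour. Each agent has a state in $\{S,I\}$. Whenever the two agents occupy the same vertex and at least one is infected, both are infected immediately. Each infected agent independently recovers (returns to $S$) after an $\mathrm{Exp}(\gamma)$ time. Initially both agents are infected and at the same vertex. $T=\inf\{t\ge0:\text{both agents are in state } S\}$ is the end of epidemic time. By edge-transitivity the distribution of $N$ does not depend on the chosen edge; $N$ depends only on $G$. *)

(* Defs.v *)
From mathcomp Require Import all_boot.
From Stdlib Require Import Reals.
Set Implicit Arguments. Unset Strict Implicit. Unset Printing Implicit Defensive.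

Definition simple_graph (T : finType) (e : rel T) : Prop :=
  symmetric e /\ irreflexive e.

Definition graph_connected (T : finType) (e : rel T) : Prop :=
  forall x y : T, connect e x y.

Definition edge_transitive (T : finType) (e : rel T) : Prop :=
  forall x1 y1 x2 y2 : T, e x1 y1 -> e x2 y2 ->
    exists f : T -> T, bijective f /\ (forall a b, e (f a) (f b) = e a b) /\
      ((f x1 = x2 /\ f y1 = y2) \/ (f x1 = y2 /\ f y1 = x2)).

Definition deg (T : finType) (e : rel T) (x : T) : nat := #|[pred w | e x w]|.

Open Scope R_scope.

Definition rsum (T : finType) (P : pred T) (F : T -> R) : R :=
  \big[Rplus/0]_(w : T | P w) F w.

(* pN e n x y = P(N = n) for walkers started at x and y: each jump is made by
   walker 1 or walker 2 with probability 1/2 each (equal rates lambda), to a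
   uniform neighbour; N = number of jumps until first co-location. *)
Fixpoint pN (T : finType) (e : rel T) (n : nat) (x y : T) : R :=
  match n with
  | O => if x == y then 1 else 0
  | S m => if x == y then 0 else
      rsum [pred w | e x w] (fun w => / 2 * / INR (deg e x) * pN e m w y)
    + rsum [pred w | e y w] (fun w => / 2 * / INR (deg e y) * pN e m x w)
  end.

(* E[z^N] is the sum of the series  sum_n P(N = n) z^n. *)
Definition genN_term (T : finType) (e : rel T) (x y : T) (z : R) (n : nat) : R :=
  pN e n x y * z ^ n.

Record sstate (T : Type) := SState { pos1 : T; pos2 : T; inf1 : bool; inf2 : bool }.

Definition close (T : finType) (st : sstate T) : sstate T :=
  if (pos1 st == pos2 st) && (inf1 st || inf2 st)
  then SState (pos1 st) (pos2 st) true true else st.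

Definition absorbed (T : Type) (st : sstate T) : bool := ~~ inf1 st && ~~ inf2 st.

Definition qrate (T : Type) (lam gam : R) (st : sstate T) : R :=
  2 * lam + gam * ((if inf1 st then 1 else 0) + (if inf2 st then 1 else 0)).

(* lt_n e lam gam s n st = E[ e^{-s T} ; T is reached after exactly n
   transitions ], computed through the jump-chain / exponential-holding-time
   construction of the chain: along a path of transitions, each transition of
   rate r out of a state of total rate q contributes the factor
   (r/q) * E[e^{-s Exp(q)}] = r / (q + s). *)
Fixpoint lt_n (T : finType) (e : rel T) (lam gam s : R) (n : nat) (st : sstate T) : R :=
  match n with
  | O => if absorbed st then 1 else 0
  | S m => if absorbed st then 0 else
      let d := qrate lam gam st + s in
        rsum [pred w | e (pos1 st) w]
          (fun w => lam / INR (deg e (pos1 st)) / d *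
             lt_n e lam gam s m (close (SState w (pos2 st) (inf1 st) (inf2 st))))
      + rsum [pred w | e (pos2 st) w]
          (fun w => lam / INR (deg e (pos2 st)) / d *
             lt_n e lam gam s m (close (SState (pos1 st) w (inf1 st) (inf2 st))))
      + (if inf1 st then gam / d *
             lt_n e lam gam s m (close (SState (pos1 st) (pos2 st) false (inf2 st)))
         else 0)
      + (if inf2 st then gam / d *
             lt_n e lam gam s m (close (SState (pos1 st) (pos2 st) (inf1 st) false))
         else 0)
  end.

Definition init_state (T : Type) (v0 : T) : sstate T := SState v0 v0 true true.

(* Main.v *)
Require Import Defs.
From HB Require Import structures.
From mathcomp Require Import all_boot.
From Stdlib Require Import Reals Lra FunctionalExtensionality.
From Coquelicot Require Import Coquelicot.
Open Scope R_scope.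
Set Warnings "-notation-overridden".

Lemma Rplus_assoc_ssr : associative Rplus. Proof. move=> a b c; ring. Qed.
HB.instance Definition _ := Monoid.isComLaw.Build R 0 Rplus Rplus_assoc_ssr Rplus_comm Rplus_0_l.

Section Rsum.
Variable T : finType.
Implicit Types (P : pred T) (f g : T -> R).

Lemma rsum_ext P f g : (forall w, P w -> f w = g w) -> rsum P f = rsum P g.
Proof. move=> H; rewrite /rsum; exact: eq_bigr. Qed.

Lemma rsum_lin P (k f g : T -> R) a b :
  rsum P (fun w => k w * (a * f w + b * g w)) =
  a * rsum P (fun w => k w * f w) + b * rsum P (fun w => k w * g w).
Proof.
rewrite /rsum; apply: (big_rec3 (fun x y z => x = a * y + b * z)); first ring.
by move=> i x y z _ ->; ring.
Qed.

Lemma rsum_add P f g : rsum P (fun w => f w + g w) = rsum P f + rsum P g.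
Proof.
rewrite /rsum; apply: (big_rec3 (fun x y z => x = y + z)); first ring.
by move=> i x y z _ ->; ring.
Qed.

Lemma rsum_scal P f k : rsum P (fun w => k * f w) = k * rsum P f.
Proof.
rewrite /rsum; apply: (big_rec2 (fun x y => x = k * y)); first ring.
by move=> i x y _ ->; ring.
Qed.

Lemma rsum_le P f g : (forall w, P w -> f w <= g w) -> rsum P f <= rsum P g.
Proof.
move=> H; rewrite /rsum; apply: (big_rec2 (fun x y => x <= y)); first lra.
move=> i x y Pi Hxy; have := H i Pi; lra.
Qed.

Lemma rsum_ge0 P f : (forall w, P w -> 0 <= f w) -> 0 <= rsum P f.
Proof.
move=> H; rewrite /rsum; apply: (big_rec (fun x => 0 <= x)); first lra.
move=> i x Pi Hx; have := H i Pi; lra.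
Qed.

Lemma rsum_abs P f g : (forall w, P w -> Rabs (f w) <= g w) -> Rabs (rsum P f) <= rsum P g.
Proof.
move=> H; rewrite /rsum; apply: (big_rec2 (fun x y => Rabs x <= y)).
  by rewrite Rabs_R0; lra.
move=> i x y Pi Hxy; have := H i Pi; have := Rabs_triang (f i) x; lra.
Qed.

Lemma rsum_const P k : rsum P (fun _ => k) = INR #|P| * k.
Proof.
rewrite /rsum.
have -> : \big[Rplus/0]_(w | P w) k = \big[Rplus/0]_(w | P w) (INR 1 * k).
  by apply: eq_bigr => w _; simpl; ring.
have Hm := @big_morph R nat (fun n => INR n * k) 0 Rplus O addn.
rewrite -Hm.
- by rewrite sum1_card.
- by move=> a b /=; rewrite plus_INR; ring.
- by simpl; ring.
Qed.

Lemma sum_rsum P (g : T -> nat -> R) N :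
  sum_f_R0 (fun n => rsum P (fun w => g w n)) N = rsum P (fun w => sum_f_R0 (g w) N).
Proof.
elim: N => [|N IH] /=; first by [].
by rewrite IH -rsum_add.
Qed.

Lemma lim_rsum P (g : T -> nat -> R) (l : T -> R) :
  (forall w, P w -> is_lim_seq (g w) (l w)) ->
  is_lim_seq (fun n => rsum P (fun w => g w n)) (rsum P l).
Proof.
move=> H; rewrite /rsum; elim: (index_enum T) => [|i r IH].
  apply: (is_lim_seq_ext (fun _ => 0)); first by move=> n; rewrite big_nil.
  rewrite big_nil; exact: is_lim_seq_const.
case Pi: (P i).
  apply: (is_lim_seq_ext (fun n => g i n + \big[Rplus/0]_(j <- r | P j) g j n)).
    by move=> n; rewrite big_cons Pi.
  rewrite big_cons Pi; apply: is_lim_seq_plus' => //; exact: H.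
apply: (is_lim_seq_ext (fun n => \big[Rplus/0]_(j <- r | P j) g j n)).
  by move=> n; rewrite big_cons Pi.
by rewrite big_cons Pi.
Qed.

End Rsum.
Arguments rsum_ext {T}. Arguments rsum_lin {T}. Arguments rsum_add {T}. Arguments rsum_scal {T}.
Arguments rsum_le {T}. Arguments rsum_ge0 {T}. Arguments rsum_abs {T}. Arguments rsum_const {T}.
Arguments sum_rsum {T}. Arguments lim_rsum {T}.

Lemma inv_INR_ge0 (k : nat) : 0 <= / INR k.
Proof.
case: k => [|k]; first by rewrite /= Rinv_0; lra.
apply: Rlt_le; apply: Rinv_0_lt_compat; by apply: lt_0_INR; apply/ltP.
Qed.

Lemma avg_le (k : nat) : INR k * (/ 2 * / INR k) <= / 2.
Proof.
case: k => [|k]; first by rewrite /=; lra.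
have H : INR k.+1 <> 0 by apply: not_0_INR.
rewrite (_ : INR k.+1 * (/ 2 * / INR k.+1) = / 2); [lra | field; auto].
Qed.

Section PN.
Variables (T : finType) (e : rel T).

Lemma pN_ge0 n x y : 0 <= pN e n x y.
Proof.
elim: n x y => [|n IH] x y /=; first by case: (x == y); lra.
case: (x == y); first lra.
apply: Rplus_le_le_0_compat; apply: rsum_ge0 => w _;
  (apply: Rmult_le_pos; [apply: Rmult_le_pos; [lra|apply: inv_INR_ge0]|apply: IH]).
Qed.

Lemma pN_sym n x y : pN e n x y = pN e n y x.
Proof.
elim: n x y => [|n IH] x y /=; first by rewrite eq_sym.
rewrite eq_sym; case: (y == x); first by [].
rewrite Rplus_comm; congr (_ + _); apply: rsum_ext => w _; by rewrite IH.
Qed.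

Lemma deg_auto (f : T -> T) :
  bijective f -> (forall a b, e (f a) (f b) = e a b) -> forall x, deg e (f x) = deg e x.
Proof.
move=> bf ef x; rewrite /deg -!sum1_card.
rewrite (reindex f) /=; last by apply: onW_bij.
by apply: eq_bigl => w; rewrite !inE ef.
Qed.

Lemma rsum_reindex (f : T -> T) (P : pred T) (F : T -> R) :
  bijective f -> rsum P F = rsum (fun w => P (f w)) (fun w => F (f w)).
Proof. move=> bf; rewrite /rsum (reindex f) //; by apply: onW_bij. Qed.

Lemma pN_auto (f : T -> T) :
  bijective f -> (forall a b, e (f a) (f b) = e a b) ->
  forall n x y, pN e n (f x) (f y) = pN e n x y.
Proof.
move=> bf ef; have fi := bij_inj bf.
elim=> [|n IH] x y /=; first by rewrite (inj_eq fi).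
rewrite (inj_eq fi); case: (x == y); first by [].
rewrite !deg_auto //.
rewrite (rsum_reindex f _ _ bf) [X in _ + X](rsum_reindex f _ _ bf).
congr (_ + _); rewrite /rsum; apply: eq_big => w /=; rewrite ?ef ?IH //.
Qed.

End PN.
Arguments pN_ge0 {T}.
Arguments pN_sym {T}.
Arguments deg_auto {T}.
Arguments pN_auto {T}.

Lemma rsum_distr (T : finType) (P : pred T) (c : R) (f g : T -> R) :
  rsum P (fun w => c * (f w + g w)) = rsum P (fun w => c * f w) + rsum P (fun w => c * g w).
Proof.
rewrite -rsum_add; apply: rsum_ext => w _; ring.
Qed.

Lemma half_inv_ge0 k : 0 <= / 2 * / INR k.
Proof. apply: Rmult_le_pos; [lra | exact: inv_INR_ge0]. Qed.

Section GF.
Variables (T : finType) (e : rel T).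

Lemma genN_succ z x y n : x != y ->
  genN_term e x y z n.+1 =
  z * (rsum [pred w | e x w] (fun w => / 2 * / INR (deg e x) * genN_term e w y z n)
     + rsum [pred w | e y w] (fun w => / 2 * / INR (deg e y) * genN_term e x w z n)).
Proof.
move=> Hxy; rewrite /genN_term /= (negbTE Hxy).
rewrite (rsum_ext _ (fun w => / 2 * / INR (deg e x) * (pN e n w y * z ^ n))
                    (fun w => z ^ n * (/ 2 * / INR (deg e x) * pN e n w y))); last by move=> *; ring.
rewrite (rsum_ext _ (fun w => / 2 * / INR (deg e y) * (pN e n x w * z ^ n))
                    (fun w => z ^ n * (/ 2 * / INR (deg e y) * pN e n x w))); last by move=> *; ring.
rewrite !rsum_scal; ring.
Qed.

Lemma psum_succ z x y N : x != y ->
  sum_f_R0 (genN_term e x y z) N.+1 =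
  z * (rsum [pred w | e x w] (fun w => / 2 * / INR (deg e x) * sum_f_R0 (genN_term e w y z) N)
     + rsum [pred w | e y w] (fun w => / 2 * / INR (deg e y) * sum_f_R0 (genN_term e x w z) N)).
Proof.
move=> Hxy; elim: N => [|N IH].
  rewrite /= genN_succ //; rewrite /genN_term /= (negbTE Hxy); ring.
rewrite tech5 IH genN_succ //.
rewrite (rsum_ext _ (fun w => / 2 * / INR (deg e x) * sum_f_R0 (genN_term e w y z) N.+1)
   (fun w => / 2 * / INR (deg e x) * (sum_f_R0 (genN_term e w y z) N + genN_term e w y z N.+1)));
  last by move=> w _; rewrite tech5.
rewrite (rsum_ext _ (fun w => / 2 * / INR (deg e y) * sum_f_R0 (genN_term e x w z) N.+1)
   (fun w => / 2 * / INR (deg e y) * (sum_f_R0 (genN_term e x w z) N + genN_term e x w z N.+1)));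
  last by move=> w _; rewrite tech5.
rewrite !rsum_distr; ring.
Qed.

Lemma psum_diag z x N : sum_f_R0 (genN_term e x x z) N = 1.
Proof.
elim: N => [|N IH]; first by rewrite /= /genN_term /= eqxx; ring.
by rewrite tech5 IH /genN_term /= eqxx; ring.
Qed.

Lemma half_bound x (S : T -> R) B : 0 <= B -> (forall w, e x w -> S w <= B) ->
  rsum [pred w | e x w] (fun w => / 2 * / INR (deg e x) * S w) <= / 2 * B.
Proof.
move=> HB HS.
apply: Rle_trans (rsum_le _ _ (fun _ => / 2 * / INR (deg e x) * B) _) _.
  move=> w ew; apply: Rmult_le_compat_l; last exact: HS.
  apply: Rmult_le_pos; [lra | exact: inv_INR_ge0].
rewrite rsum_const.
rewrite (_ : INR #|[pred w | e x w]| * (/ 2 * / INR (deg e x) * B) =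
             (INR (deg e x) * (/ 2 * / INR (deg e x))) * B); last by rewrite /deg; ring.
apply: Rmult_le_compat_r => //; exact: avg_le.
Qed.

Lemma psum_ge0 z x y N : 0 <= z <= 1 ->
  0 <= sum_f_R0 (genN_term e x y z) N.
Proof.
move=> Hz.
  apply: cond_pos_sum => n; apply: Rmult_le_pos; [exact: pN_ge0 | apply: pow_le; lra].
Qed.

Lemma psum_bounds0 z x y N : 0 <= z <= 1 ->
  0 <= sum_f_R0 (genN_term e x y z) N <= 1 + 0.
Proof.
move=> Hz; split; first exact: psum_ge0.
rewrite Rplus_0_r; elim: N x y => [|N IH] x y.
  rewrite /= /genN_term /=; case: (x == y); lra.
case Hxy: (x == y); first by move/eqP: Hxy => ->; rewrite psum_diag; lra.
rewrite psum_succ ?Hxy //.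
have H1 := half_bound x (fun w => sum_f_R0 (genN_term e w y z) N) 1 ltac:(lra) (fun w _ => IH w y).
have H2 := half_bound y (fun w => sum_f_R0 (genN_term e x w z) N) 1 ltac:(lra) (fun w _ => IH x w).
have H3 : 0 <= rsum [pred w | e x w] (fun w => / 2 * / INR (deg e x) * sum_f_R0 (genN_term e w y z) N)
             + rsum [pred w | e y w] (fun w => / 2 * / INR (deg e y) * sum_f_R0 (genN_term e x w z) N).
  apply: Rplus_le_le_0_compat; apply: rsum_ge0 => w _; apply: Rmult_le_pos;
   [apply: half_inv_ge0 | apply: (psum_ge0 _ _ _ _ Hz)
   | apply: half_inv_ge0 | apply: (psum_ge0 _ _ _ _ Hz)].
nra.
Qed.

Lemma psum_bounds z x y N : 0 <= z <= 1 ->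
  0 <= sum_f_R0 (genN_term e x y z) N <= 1.
Proof. move=> Hz; have := psum_bounds0 z x y N Hz; lra. Qed.

Definition G z x y := real (Lim_seq (sum_f_R0 (genN_term e x y z))).

Lemma G_lim z x y : 0 <= z <= 1 ->
  is_lim_seq (sum_f_R0 (genN_term e x y z)) (G z x y) /\ 0 <= G z x y <= 1.
Proof.
move=> Hz.
have ex : ex_lim_seq (sum_f_R0 (genN_term e x y z)).
  apply: ex_lim_seq_incr => n; rewrite tech5.
  have : 0 <= genN_term e x y z n.+1 by apply: Rmult_le_pos; [exact: pN_ge0 | apply: pow_le; lra].
  lra.
have H := Lim_seq_correct _ ex.
have H0 := is_lim_seq_le (fun _ => 0) _ 0 _ (fun n => proj1 (psum_bounds z x y n Hz)) (is_lim_seq_const 0) H.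
have H1 := is_lim_seq_le _ (fun _ => 1) _ 1 (fun n => proj2 (psum_bounds z x y n Hz)) H (is_lim_seq_const 1).
rewrite /G; move: H H0 H1.
case: (Lim_seq (sum_f_R0 (genN_term e x y z))) => [r| |] //= H H0 H1.
Qed.

Lemma G_diag z x : G z x x = 1.
Proof.
rewrite /G (Lim_seq_ext _ (fun _ => 1)); last by move=> n; rewrite psum_diag.
by rewrite Lim_seq_const.
Qed.

Lemma G_rec z x y : 0 <= z <= 1 -> x != y ->
  G z x y = z * (rsum [pred w | e x w] (fun w => / 2 * / INR (deg e x) * G z w y)
               + rsum [pred w | e y w] (fun w => / 2 * / INR (deg e y) * G z x w)).
Proof.
move=> Hz Hxy.
have H1 := proj1 (is_lim_seq_incr_1 _ _) (proj1 (G_lim z x y Hz)).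
have H2 : is_lim_seq (fun N => sum_f_R0 (genN_term e x y z) N.+1)
   (z * (rsum [pred w | e x w] (fun w => / 2 * / INR (deg e x) * G z w y)
               + rsum [pred w | e y w] (fun w => / 2 * / INR (deg e y) * G z x w))).
  apply: (is_lim_seq_ext (fun N => z * (rsum [pred w | e x w] (fun w => / 2 * / INR (deg e x) * sum_f_R0 (genN_term e w y z) N)
     + rsum [pred w | e y w] (fun w => / 2 * / INR (deg e y) * sum_f_R0 (genN_term e x w z) N)))).
    by move=> N; rewrite psum_succ.
  apply: (is_lim_seq_scal_l _ z (Finite _)).
  apply: is_lim_seq_plus'.
    apply: (lim_rsum _ (fun w N => / 2 * / INR (deg e x) * sum_f_R0 (genN_term e w y z) N)) => w _.
    apply: (is_lim_seq_scal_l _ _ (Finite _)); exact: (proj1 (G_lim z w y Hz)).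
  apply: (lim_rsum _ (fun w N => / 2 * / INR (deg e y) * sum_f_R0 (genN_term e x w z) N)) => w _.
  apply: (is_lim_seq_scal_l _ _ (Finite _)); exact: (proj1 (G_lim z x w Hz)).
have := is_lim_seq_unique _ _ H1; rewrite (is_lim_seq_unique _ _ H2); by case.
Qed.

Lemma G_sym z x y : G z x y = G z y x.
Proof.
rewrite /G (Lim_seq_ext _ (sum_f_R0 (genN_term e y x z))) //.
move=> n; apply: sum_eq => i _; by rewrite /genN_term pN_sym.
Qed.

Lemma G_auto (f : T -> T) z x y :
  bijective f -> (forall a b, e (f a) (f b) = e a b) -> G z (f x) (f y) = G z x y.
Proof.
move=> bf ef; rewrite /G (Lim_seq_ext _ (sum_f_R0 (genN_term e x y z))) //.
move=> n; apply: sum_eq => i _; by rewrite /genN_term pN_auto.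
Qed.

End GF.
Arguments genN_succ {T}.
Arguments psum_succ {T}.
Arguments psum_diag {T}.
Arguments half_bound {T}.
Arguments psum_ge0 {T}.
Arguments psum_bounds0 {T}.
Arguments psum_bounds {T}.
Arguments G {T}.
Arguments G_lim {T}.
Arguments G_diag {T}.
Arguments G_rec {T}.
Arguments G_sym {T}.
Arguments G_auto {T}.

Lemma S_le1 (T : finType) (e : rel T) z1 z2 x y : 0 <= z1 <= 1 -> 0 <= z2 <= 1 ->
  (forall n, 2 * z1 ^ n - z2 ^ n <= 1) -> 2 * G e z1 x y - G e z2 x y <= 1.
Proof.
move=> H1 H2 Hn.
have L := is_lim_seq_minus' _ _ _ _
   (is_lim_seq_scal_l _ 2 (Finite _) (proj1 (G_lim e z1 x y H1))) (proj1 (G_lim e z2 x y H2)).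
suff Hle : forall N, 2 * sum_f_R0 (genN_term e x y z1) N - sum_f_R0 (genN_term e x y z2) N <= 1.
  by have := is_lim_seq_le _ (fun _ => 1) _ 1 Hle L (is_lim_seq_const 1).
move=> N.
have -> : 2 * sum_f_R0 (genN_term e x y z1) N - sum_f_R0 (genN_term e x y z2) N =
          sum_f_R0 (fun n => pN e n x y * (2 * z1 ^ n - z2 ^ n)) N.
  elim: N => [|N IH] /=; rewrite /genN_term /=; first ring.
  rewrite /genN_term in IH; rewrite -IH; ring.
apply: Rle_trans (proj2 (psum_bounds e 1 x y N ltac:(lra))).
apply: sum_Rle => n _; rewrite /genN_term pow1.
have := pN_ge0 e n x y; have := Hn n; nra.
Qed.

Lemma pow_ineq lam gam s n : 0 < lam -> 0 < gam -> 0 < s ->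
  2 * (2 * lam / (2 * lam + s + gam)) ^ n - (2 * lam / (2 * lam + s + 2 * gam)) ^ n <= 1.
Proof.
move=> Hl Hg Hs.
set z1 := 2 * lam / (2 * lam + s + gam); set z2 := 2 * lam / (2 * lam + s + 2 * gam).
have Hz1 : 0 <= z1 by rewrite /z1; apply: Rmult_le_pos; [lra | apply: Rlt_le; apply: Rinv_0_lt_compat; lra].
have Hsq : z1 * z1 <= z2.
  have E : z2 - z1 * z1 = (2 * lam * ((2*lam+s+gam)^2 - 2*lam*(2*lam+s+2*gam))) *
        / ((2*lam+s+2*gam) * (2*lam+s+gam)^2).
    rewrite /z1 /z2; field; lra.
  have : 0 <= (2 * lam * ((2*lam+s+gam)^2 - 2*lam*(2*lam+s+2*gam))) *
        / ((2*lam+s+2*gam) * (2*lam+s+gam)^2).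
    apply: Rmult_le_pos; first by apply: Rmult_le_pos; nra.
    apply: Rlt_le; apply: Rinv_0_lt_compat; apply: Rmult_lt_0_compat; nra.
  lra.
have := pow_incr (z1 * z1) z2 n (conj (Rmult_le_pos _ _ Hz1 Hz1) Hsq).
rewrite Rpow_mult_distr => H; have := Rle_0_sqr (z1 ^ n - 1); rewrite /Rsqr; nra.
Qed.

Lemma rsum_aff (T : finType) (P : pred T) (k a b c : R) (f g : T -> R) :
  rsum P (fun w => k * (a + b * f w + c * g w)) =
  k * (a * INR #|P| + b * rsum P f + c * rsum P g).
Proof.
rewrite (rsum_ext P _ (fun w => (k * a + (k * b * f w + k * c * g w)))); last by move=> *; ring.
rewrite rsum_add rsum_const rsum_add.
rewrite (rsum_scal P f (k * b)) (rsum_scal P g (k * c)); ring.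
Qed.

Lemma rsum_const_deg (T : finType) (e : rel T) x k :
  rsum [pred w | e x w] (fun _ => k) = INR (deg e x) * k.
Proof. by rewrite rsum_const. Qed.

Lemma rsum_aff_deg (T : finType) (e : rel T) x (k a b c : R) (f g : T -> R) :
  rsum [pred w | e x w] (fun w => k * (a + b * f w + c * g w)) =
  k * (a * INR (deg e x) + b * rsum [pred w | e x w] f + c * rsum [pred w | e x w] g).
Proof. by rewrite rsum_aff. Qed.

Section Main.
Variables (T : finType) (e : rel T) (lam gam s : R) (u v : T).
Hypotheses (Hsg : simple_graph e) (Hcon : graph_connected e) (Het : edge_transitive e)
  (Hl : 0 < lam) (Hg : 0 < gam) (Hs : 0 < s) (Huv : e u v).

Let z1 := 2 * lam / (2 * lam + s + gam).
Let z2 := 2 * lam / (2 * lam + s + 2 * gam).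

Lemma z1_bnd : 0 <= z1 <= 1.
Proof.
rewrite /z1; split; first by apply: Rmult_le_pos; [lra | apply: Rlt_le; apply: Rinv_0_lt_compat; lra].
apply: (Rmult_le_reg_r (2 * lam + s + gam)); first lra.
rewrite /Rdiv Rmult_assoc Rinv_l; lra.
Qed.

Lemma z2_bnd : 0 <= z2 <= 1.
Proof.
rewrite /z2; split; first by apply: Rmult_le_pos; [lra | apply: Rlt_le; apply: Rinv_0_lt_compat; lra].
apply: (Rmult_le_reg_r (2 * lam + s + 2 * gam)); first lra.
rewrite /Rdiv Rmult_assoc Rinv_l; lra.
Qed.

Lemma has_nb x : exists w, e x w.
Proof.
case Hxu: (x == u); first by move/eqP: Hxu => ->; exists v.
have := Hcon x u; case/connectP => p Hp Hl'.
case: p Hp Hl' => [|w p] /=; first by move=> _ Hux; rewrite Hux eqxx in Hxu.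
by case/andP => Hxw _ _; exists w.
Qed.

Lemma deg_pos x : 0 < INR (deg e x).
Proof.
apply: lt_0_INR; apply/ltP; case: (has_nb x) => w Hw.
by apply/card_gt0P; exists w.
Qed.

Lemma G_edge z a b : e a b -> G e z a b = G e z u v.
Proof.
move=> Hab; case: (Het a b u v Hab Huv) => f [bf [ef [[H1 H2]|[H1 H2]]]].
  by rewrite -(G_auto e f z a b bf ef) H1 H2.
by rewrite -(G_auto e f z a b bf ef) H1 H2 G_sym.
Qed.

Definition FF x y := 2 * gam * ((1 - G e z1 x y) / (s + gam) - (1 - G e z2 x y) / (s + 2 * gam)).
Definition SS x y := 2 * G e z1 x y - G e z2 x y.
Definition DD := (2 * lam + s) / (2 * lam) - 2 * G e z1 u v + G e z2 u v.
Definition LL := 2 * gam * ((1 - G e z1 u v) / (s + gam) - (1 - G e z2 u v) / (s + 2 * gam)) / DD.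
Definition CC x y := gam / (s + gam) * (1 - G e z1 x y) + G e z1 x y * LL.

Definition phi (st : sstate T) : R :=
  if absorbed st then 1 else
  if inf1 st && inf2 st then FF (pos1 st) (pos2 st) + SS (pos1 st) (pos2 st) * LL
  else CC (pos1 st) (pos2 st).

Definition Op0 (f : sstate T -> R) (st : sstate T) : R :=
      let d := qrate lam gam st + s in
        rsum [pred w | e (pos1 st) w]
          (fun w => lam / INR (deg e (pos1 st)) / d *
             f (Defs.close (SState w (pos2 st) (inf1 st) (inf2 st))))
      + rsum [pred w | e (pos2 st) w]
          (fun w => lam / INR (deg e (pos2 st)) / d *
             f (Defs.close (SState (pos1 st) w (inf1 st) (inf2 st))))
      + (if inf1 st then gam / d *
             f (Defs.close (SState (pos1 st) (pos2 st) false (inf2 st)))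
         else 0)
      + (if inf2 st then gam / d *
             f (Defs.close (SState (pos1 st) (pos2 st) (inf1 st) false))
         else 0).

Lemma lt_succ n (st : sstate T) : lt_n e lam gam s n.+1 st =
  if absorbed st then 0 else Op0 (lt_n e lam gam s n) st.
Proof. by []. Qed.

Lemma DD_pos : 0 < DD.
Proof.
have H := S_le1 T e z1 z2 u v z1_bnd z2_bnd (fun n => pow_ineq lam gam s n Hl Hg Hs).
rewrite /DD.
have : 1 < (2 * lam + s) / (2 * lam).
  apply: (Rmult_lt_reg_r (2 * lam)); first lra.
  rewrite /Rdiv Rmult_assoc Rinv_l; lra.
lra.
Qed.

Lemma close_idem (st : sstate T) : Defs.close (Defs.close st) = Defs.close st.
Proof.
case: st => p1 p2 i1 i2; rewrite /Defs.close /=.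
case E: ((p1 == p2) && (i1 || i2)) => /=.
  by case/andP: E => /eqP -> _; rewrite eqxx.
by rewrite E.
Qed.

Lemma phi_close (st : sstate T) : phi (Defs.close st) = phi st.
Proof.
case: st => p1 p2 [] []; rewrite /Defs.close /=; case: eqP => [->|] //=;
  rewrite /phi /= /CC /FF /SS ?G_diag; rewrite /Rdiv; ring.
Qed.

Lemma phi_fix (st : sstate T) : Defs.close st = st -> ~~ absorbed st -> phi st = Op0 phi st.
Proof.
move=> Hgood Habs; rewrite /Op0.
rewrite (rsum_ext _ _ (fun w => lam / INR (deg e (pos1 st)) / (qrate lam gam st + s) *
             phi (SState w (pos2 st) (inf1 st) (inf2 st)))); last by move=> w _; cbv beta; rewrite phi_close.
rewrite (rsum_ext [pred w | e (pos2 st) w] _ (fun w => lam / INR (deg e (pos2 st)) / (qrate lam gam st + s) *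
             phi (SState (pos1 st) w (inf1 st) (inf2 st)))); last by move=> w _; cbv beta; rewrite phi_close.
rewrite ?phi_close.
case: st Hgood Habs => x y [] [] Hgood Habs //=.
- case Hxy: (x == y).
  + move/eqP: Hxy => <-.
    have Hd := deg_pos x.
    rewrite (rsum_ext [pred w | e x w] _ (fun w => lam / INR (deg e x) / (qrate lam gam (SState x x true true) + s) * (FF u v + SS u v * LL))); last first.
      move=> w Hw; have Ew : e w x by rewrite (proj1 Hsg).
      by rewrite /phi /= /FF /SS (G_edge z1 _ _ Ew) (G_edge z2 _ _ Ew).
    rewrite (rsum_ext [pred w | e x w] _ (fun w => lam / INR (deg e x) / (qrate lam gam (SState x x true true) + s) * (FF u v + SS u v * LL))); last first.
      move=> w Hw /=.
      by rewrite /phi /= /FF /SS (G_edge z1 _ _ Hw) (G_edge z2 _ _ Hw).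
    rewrite !rsum_const_deg /phi /= /CC /FF /SS /qrate /= !G_diag.
    have HL : LL * DD = FF u v by rewrite /LL /FF; field; have := DD_pos; lra.
    move: HL; rewrite /DD /FF.
    move: Hd; generalize (G e z1 u v) (G e z2 u v) (INR (deg e x)) LL => g1 g2 dg l Hd.
    set F := 2 * gam * ((1 - g1) / (s + gam) - (1 - g2) / (s + 2 * gam)).
    move=> H; rewrite -H; field; repeat split; apply: Rgt_not_eq; lra.
  + have Hxy' : x != y by rewrite Hxy.
    have Hdx := deg_pos x; have Hdy := deg_pos y.
    set d := qrate lam gam (SState x y true true) + s.
    have Hd : 0 < d by rewrite /d /qrate /=; lra.
    rewrite (rsum_ext [pred w | e x w] _ (fun w => lam / INR (deg e x) / d *
       ((2*gam/(s+gam) - 2*gam/(s+2*gam)) + (2*LL - 2*gam/(s+gam)) * G e z1 w y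
        + (2*gam/(s+2*gam) - LL) * G e z2 w y))); last first.
      move=> w _; rewrite /phi /= /FF /SS; field; repeat split; apply: Rgt_not_eq; lra.
    rewrite (rsum_ext [pred w | e y w] _ (fun w => lam / INR (deg e y) / d *
       ((2*gam/(s+gam) - 2*gam/(s+2*gam)) + (2*LL - 2*gam/(s+gam)) * G e z1 x w
        + (2*gam/(s+2*gam) - LL) * G e z2 x w))); last first.
      move=> w _; rewrite /phi /= /FF /SS; field; repeat split; apply: Rgt_not_eq; lra.
    rewrite !rsum_aff_deg.
    have R1 := G_rec e z1 x y z1_bnd Hxy'; have R2 := G_rec e z2 x y z2_bnd Hxy'.
    rewrite !rsum_scal in R1 R2.
    rewrite /phi /= /FF /SS /CC /d /qrate /= R1 R2 /z1 /z2; field; repeat split; apply: Rgt_not_eq; lra.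
- case Hxy: (x == y).
    move/eqP: Hxy => Exy; subst y; rewrite /Defs.close /= eqxx in Hgood; by case: Hgood.
  have Hxy' : x != y by rewrite Hxy.
  have Hdx := deg_pos x; have Hdy := deg_pos y.
  set d := qrate lam gam (SState x y true false) + s.
  have Hd : 0 < d by rewrite /d /qrate /=; lra.
  rewrite (rsum_ext [pred w | e x w] _ (fun w => lam / INR (deg e x) / d *
       (gam/(s+gam) + (LL - gam/(s+gam)) * G e z1 w y + 0 * G e z1 w y))); last first.
    move=> w _; rewrite /phi /= /CC; field; repeat split; apply: Rgt_not_eq; lra.
  rewrite (rsum_ext [pred w | e y w] _ (fun w => lam / INR (deg e y) / d *
       (gam/(s+gam) + (LL - gam/(s+gam)) * G e z1 x w + 0 * G e z1 x w))); last first.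
    move=> w _; rewrite /phi /= /CC; field; repeat split; apply: Rgt_not_eq; lra.
  rewrite !rsum_aff_deg.
  have R1 := G_rec e z1 x y z1_bnd Hxy'.
  rewrite !rsum_scal in R1.
  rewrite /phi /= /CC /d /qrate /= R1 /z1; field; repeat split; apply: Rgt_not_eq; lra.
- case Hxy: (x == y).
    move/eqP: Hxy => Exy; subst y; rewrite /Defs.close /= eqxx in Hgood; by case: Hgood.
  have Hxy' : x != y by rewrite Hxy.
  have Hdx := deg_pos x; have Hdy := deg_pos y.
  set d := qrate lam gam (SState x y false true) + s.
  have Hd : 0 < d by rewrite /d /qrate /=; lra.
  rewrite (rsum_ext [pred w | e x w] _ (fun w => lam / INR (deg e x) / d *
       (gam/(s+gam) + (LL - gam/(s+gam)) * G e z1 w y + 0 * G e z1 w y))); last first.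
    move=> w _; rewrite /phi /= /CC; field; repeat split; apply: Rgt_not_eq; lra.
  rewrite (rsum_ext [pred w | e y w] _ (fun w => lam / INR (deg e y) / d *
       (gam/(s+gam) + (LL - gam/(s+gam)) * G e z1 x w + 0 * G e z1 x w))); last first.
    move=> w _; rewrite /phi /= /CC; field; repeat split; apply: Rgt_not_eq; lra.
  rewrite !rsum_aff_deg.
  have R1 := G_rec e z1 x y z1_bnd Hxy'.
  rewrite !rsum_scal in R1.
  rewrite /phi /= /CC /d /qrate /= R1 /z1; field; repeat split; apply: Rgt_not_eq; lra.
Qed.

Let c := (2 * lam + 2 * gam) / (2 * lam + 2 * gam + s).

Lemma c_bnd : 0 <= c < 1.
Proof.
rewrite /c; split.
  apply: Rmult_le_pos; [lra | apply: Rlt_le; apply: Rinv_0_lt_compat; lra].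
apply: (Rmult_lt_reg_r (2 * lam + 2 * gam + s)); first lra.
rewrite /Rdiv Rmult_assoc Rinv_l; lra.
Qed.

Lemma Op0_ext f g (st : sstate T) : (forall x, f x = g x) -> Op0 f st = Op0 g st.
Proof.
by move=> H; have -> : f = g by apply: functional_extensionality.
Qed.

Lemma Op0_lin f g a b (st : sstate T) :
  Op0 (fun x => a * f x + b * g x) st = a * Op0 f st + b * Op0 g st.
Proof.
rewrite /Op0; cbv beta.
rewrite !rsum_lin.
case: (inf1 st); case: (inf2 st); ring.
Qed.

Lemma Op0_sum N (st : sstate T) :
  Op0 (fun x => sum_f_R0 (fun n => lt_n e lam gam s n x) N) st =
  sum_f_R0 (fun n => Op0 (lt_n e lam gam s n) st) N.
Proof.
elim: N => [|N IH]; first by [].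
rewrite (Op0_ext _ (fun x => 1 * sum_f_R0 (fun n => lt_n e lam gam s n x) N + 1 * lt_n e lam gam s N.+1 x));
  last by move=> x; rewrite tech5; ring.
rewrite Op0_lin tech5 -IH; ring.
Qed.

Lemma walk_bound x d (g : T -> R) B : 0 < d -> 0 <= B -> (forall w, Rabs (g w) <= B) ->
  Rabs (rsum [pred w | e x w] (fun w => lam / INR (deg e x) / d * g w)) <= lam / d * B.
Proof.
move=> Hd HB Hgb; have Hx := deg_pos x.
have Hk : 0 <= lam / INR (deg e x) / d.
  apply: Rmult_le_pos; last by apply: Rlt_le; apply: Rinv_0_lt_compat.
  apply: Rmult_le_pos; [lra | by apply: Rlt_le; apply: Rinv_0_lt_compat].
apply: Rle_trans (rsum_abs _ _ (fun _ => lam / INR (deg e x) / d * B) _) _.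
  move=> w _; rewrite Rabs_mult (Rabs_pos_eq _ Hk); by apply: Rmult_le_compat_l.
rewrite rsum_const_deg; right; field; split; apply: Rgt_not_eq; lra.
Qed.

Lemma ratio_le a b : 0 < a <= b -> a / (a + s) <= b / (b + s).
Proof.
move=> [Ha Hab].
have -> : a / (a + s) = 1 - s / (a + s) by field; lra.
have -> : b / (b + s) = 1 - s / (b + s) by field; lra.
suff : s / (b + s) <= s / (a + s) by lra.
apply: Rmult_le_compat_l; first lra.
apply: Rinv_le_contravar; lra.
Qed.

Lemma Rabs4 a b c' d : Rabs (a + b + c' + d) <= Rabs a + Rabs b + Rabs c' + Rabs d.
Proof.
have := Rabs_triang (a + b + c') d; have := Rabs_triang (a + b) c'; have := Rabs_triang a b; lra.
Qed.

Lemma gam_bound f d B (st' : sstate T) : 0 < d -> (forall st' : sstate T, Rabs (f (Defs.close st')) <= B) ->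
  Rabs (gam / d * f (Defs.close st')) <= gam / d * B.
Proof.
move=> Hd Hf; have Hk : 0 <= gam / d.
  apply: Rmult_le_pos; [lra | by apply: Rlt_le; apply: Rinv_0_lt_compat].
rewrite Rabs_mult (Rabs_pos_eq _ Hk); apply: Rmult_le_compat_l => //.
Qed.

Lemma Op0_bound f B (st : sstate T) : 0 <= B ->
  (forall st', Rabs (f (Defs.close st')) <= B) -> ~~ absorbed st ->
  Rabs (Op0 f st) <= c * B.
Proof.
move=> HB Hf; case: st => x y [] [] // _; rewrite /Op0 /=;
  apply: Rle_trans (Rabs4 _ _ _ _) _.
- apply: Rle_trans (_ : _ <= lam / (2 * lam + gam * (1 + 1) + s) * B + lam / (2 * lam + gam * (1 + 1) + s) * B
     + gam / (2 * lam + gam * (1 + 1) + s) * B + gam / (2 * lam + gam * (1 + 1) + s) * B) _.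
    have Hd : 0 < 2 * lam + gam * (1 + 1) + s by lra.
    repeat apply: Rplus_le_compat; (try apply: walk_bound => //); (try apply: gam_bound => //).
  right; rewrite /c; field; lra.
- apply: Rle_trans (_ : _ <= lam / (2 * lam + gam * (1 + 0) + s) * B + lam / (2 * lam + gam * (1 + 0) + s) * B
     + gam / (2 * lam + gam * (1 + 0) + s) * B + 0) _.
    have Hd : 0 < 2 * lam + gam * (1 + 0) + s by lra.
    repeat apply: Rplus_le_compat; (try apply: walk_bound => //); (try apply: gam_bound => //).
    rewrite Rabs_R0; lra.
  have := ratio_le (2 * lam + gam) (2 * lam + 2 * gam) ltac:(lra).
  move=> Hr; rewrite /c.
  have -> : lam / (2 * lam + gam * (1 + 0) + s) * B + lam / (2 * lam + gam * (1 + 0) + s) * B +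
     gam / (2 * lam + gam * (1 + 0) + s) * B + 0 = (2 * lam + gam) / (2 * lam + gam + s) * B.
    field; lra.
  by apply: Rmult_le_compat_r.
- apply: Rle_trans (_ : _ <= lam / (2 * lam + gam * (0 + 1) + s) * B + lam / (2 * lam + gam * (0 + 1) + s) * B
     + 0 + gam / (2 * lam + gam * (0 + 1) + s) * B) _.
    have Hd : 0 < 2 * lam + gam * (0 + 1) + s by lra.
    repeat apply: Rplus_le_compat; (try apply: walk_bound => //); (try apply: gam_bound => //).
    rewrite Rabs_R0; lra.
  have := ratio_le (2 * lam + gam) (2 * lam + 2 * gam) ltac:(lra).
  move=> Hr; rewrite /c.
  have -> : lam / (2 * lam + gam * (0 + 1) + s) * B + lam / (2 * lam + gam * (0 + 1) + s) * B +
     0 + gam / (2 * lam + gam * (0 + 1) + s) * B = (2 * lam + gam) / (2 * lam + gam + s) * B.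
    field; lra.
  by apply: Rmult_le_compat_r.
Qed.

Lemma frac_bnd a : 0 <= a -> 0 <= gam / (s + a) <= 1 -> True.
Proof. by []. Qed.

Lemma a_bnd a : 0 <= a -> 0 <= gam / (s + gam + a) <= 1.
Proof.
move=> Ha; split; first by apply: Rmult_le_pos; [lra | apply: Rlt_le; apply: Rinv_0_lt_compat; lra].
apply: (Rmult_le_reg_r (s + gam + a)); first lra.
rewrite /Rdiv Rmult_assoc Rinv_l; lra.
Qed.

Lemma phi_bound (st : sstate T) : Rabs (phi st) <= 4 + 3 * Rabs LL.
Proof.
have HL := Rabs_pos LL.
have [_ [h1 h1']] := G_lim e z1 (pos1 st) (pos2 st) z1_bnd.
have [_ [h2 h2']] := G_lim e z2 (pos1 st) (pos2 st) z2_bnd.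
have Ha1 := a_bnd 0 (Rle_refl 0); have Ha2 := a_bnd gam (Rlt_le _ _ Hg).
rewrite Rplus_0_r in Ha1.
rewrite /phi; case: (absorbed st); first by rewrite Rabs_R1; lra.
case: (inf1 st && inf2 st).
- apply: Rle_trans (Rabs_triang _ _) _; rewrite Rabs_mult.
  have E : FF (pos1 st) (pos2 st) = 2 * (gam / (s + gam)) * (1 - G e z1 (pos1 st) (pos2 st))
        - 2 * (gam / (s + gam + gam)) * (1 - G e z2 (pos1 st) (pos2 st)).
    rewrite /FF; field; lra.
  have B1 : Rabs (FF (pos1 st) (pos2 st)) <= 2 by rewrite E; apply: Rabs_le; split; nra.
  have B2 : Rabs (SS (pos1 st) (pos2 st)) <= 3 by rewrite /SS; apply: Rabs_le; split; lra.
  have := Rmult_le_compat_r (Rabs LL) _ _ HL B2; lra.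
- rewrite /CC; apply: Rle_trans (Rabs_triang _ _) _.
  rewrite (Rabs_pos_eq (gam / (s + gam) * _)); last by apply: Rmult_le_pos; lra.
  rewrite Rabs_mult (Rabs_pos_eq (G _ _ _ _)); last lra.
  nra.
Qed.

Lemma abs_sum N (st : sstate T) : absorbed st ->
  sum_f_R0 (fun n => lt_n e lam gam s n st) N = 1.
Proof.
move=> H; elim: N => [|N IH]; first by rewrite /= H.
by rewrite tech5 IH /= H; ring.
Qed.

Lemma conv_bound N (st : sstate T) : Defs.close st = st ->
  Rabs (phi st - sum_f_R0 (fun n => lt_n e lam gam s n st) N) <= (5 + 3 * Rabs LL) * c ^ N.
Proof.
have HL := Rabs_pos LL; have Hc := c_bnd.
elim: N st => [|N IH] st Hgood.
  have H0 : Rabs (lt_n e lam gam s 0 st) <= 1.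
    by rewrite /=; case: (absorbed st); rewrite ?Rabs_R1 ?Rabs_R0; lra.
  change (sum_f_R0 _ 0) with (lt_n e lam gam s 0 st); rewrite pow_O.
  have := Rabs_triang (phi st) (- lt_n e lam gam s 0 st); rewrite Rabs_Ropp.
  have := phi_bound st; rewrite /Rminus; lra.
have HB : 0 <= (5 + 3 * Rabs LL) * c ^ N by apply: Rmult_le_pos; [lra | apply: pow_le; lra].
case Ha: (absorbed st).
  rewrite abs_sum // /phi Ha Rminus_diag_eq // Rabs_R0.
  apply: Rmult_le_pos; [lra | apply: pow_le; lra].
rewrite decomp_sum; last by apply/ltP.
rewrite /= Ha Rplus_0_l.
rewrite (sum_eq _ (fun n => Op0 (lt_n e lam gam s n) st)); last by move=> i _; rewrite /Op0.
rewrite -Op0_sum (phi_fix st Hgood (negbT Ha)).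
set S := fun x => sum_f_R0 (fun n => lt_n e lam gam s n x) N.
have -> : Op0 phi st - Op0 S st = Op0 (fun x => 1 * phi x + (-1) * S x) st by rewrite Op0_lin; ring.
apply: Rle_trans (Op0_bound _ _ st HB _ (negbT Ha)) _.
  move=> st'; rewrite (_ : 1 * phi (Defs.close st') + -1 * S (Defs.close st') =
                           phi (Defs.close st') - S (Defs.close st')); last by ring.
  by apply: IH; rewrite close_idem.
right; rewrite /=; ring.
Qed.

Lemma phi_init v0 : phi (init_state v0) = LL.
Proof. by rewrite /phi /= /FF /SS !G_diag /Rdiv; ring. Qed.

Lemma main v0 :
    infinite_sum (genN_term e u v z1) (G e z1 u v) /\
    infinite_sum (genN_term e u v z2) (G e z2 u v) /\
    infinite_sum (fun n => lt_n e lam gam s n (init_state v0)) LL.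
Proof.
split; first exact: (proj1 (is_lim_seq_Reals _ _) (proj1 (G_lim e z1 u v z1_bnd))).
split; first exact: (proj1 (is_lim_seq_Reals _ _) (proj1 (G_lim e z2 u v z2_bnd))).
move=> eps Heps.
have HL := Rabs_pos LL; have Hc := c_bnd.
set M := 5 + 3 * Rabs LL.
have HM : 0 < M by rewrite /M; lra.
have Hc1 : Rabs c < 1 by rewrite Rabs_pos_eq; lra.
have [N HN] := pow_lt_1_zero c Hc1 (eps / M) (Rdiv_lt_0_compat _ _ Heps HM).
exists N => n Hn; rewrite /R_dist Rabs_minus_sym.
have Hg0 : Defs.close (init_state v0) = init_state v0 by rewrite /Defs.close /= eqxx.
have := conv_bound n (init_state v0) Hg0; rewrite phi_init -/M => Hb.
have := HN n Hn; rewrite Rabs_pos_eq; last by apply: pow_le; lra.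
move=> Hp.
apply: Rle_lt_trans Hb _.
have -> : eps = M * (eps / M) by field; lra.
by apply: Rmult_lt_compat_l.
Qed.

End Main.

Theorem corollary1 (T : finType) (e : rel T) (lam gam s : R) (v0 u v : T) :
  simple_graph e -> graph_connected e -> edge_transitive e ->
  0 < lam -> 0 < gam -> 0 < s -> e u v ->
  exists EA EB : R,
    infinite_sum (genN_term e u v (2 * lam / (2 * lam + s + gam))) EA /\
    infinite_sum (genN_term e u v (2 * lam / (2 * lam + s + 2 * gam))) EB /\
    infinite_sum (fun n => lt_n e lam gam s n (init_state v0))
      (2 * gam * ((1 - EA) / (s + gam) - (1 - EB) / (s + 2 * gam))
       / ((2 * lam + s) / (2 * lam) - 2 * EA + EB)).
Proof.
move=> Hsg Hcon Het Hl Hg Hs Huv.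
exists (G e (2 * lam / (2 * lam + s + gam)) u v), (G e (2 * lam / (2 * lam + s + 2 * gam)) u v).
exact: (main T e lam gam s u v Hsg Hcon Het Hl Hg Hs Huv v0).
Qed.
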